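(* Let $K$ be a fractal gasket with $\omega_\alpha,\omega_\beta\in K$. If $K$ satisfies the top isolated condition or $\omega_\gamma\notin K$, then every nontrivial connected component of $K$ (one containing more than one point) is a line segment. If in addition $\alpha$ and $\beta$ are not in the same horizontal block, then $K$ is totally disconnected.
   Context: Let $\Delta\subset\mathbb R^2$ be the triangle with vertices $\omega_\alpha=(0,0)$, $\omega_\beta=(1,0)$, $\omega_\gamma=(1/2,\sqrt3/2)$. A fractal gasket is the attractor $K$ of $\{\varphi_j(z)=r_j(z+d_j)\}_{j=1}^N$, $r_j\in(0,1)$, $d_j\in\mathbb R^2$, with $\bigcup_j\varphi_j(\Delta)\subset\Delta$ and, for $i\ne j$, $\varphi_i(\Delta)\cap\varphi_j(\Delta)$ consisting only of common vertices. $\Sigma=\{1,\dots,N\}$; when $\omega_\alpha\in K$, $\alpha\in\Sigma$ is the index with $\varphi_\alpha((0,0))=(0,0)$, and when $\omega_\beta\in K$, $\beta\in\Sigma$ is the index with $\varphi_\beta((1,0))=(1,0)$; $\gamma=-3$ if $\omega_\gamma\notin K$, otherwise $\varphi_\gamma(\omega_\gamma)=\omega_\gamma$. Top isolated condition: $\omega_\gamma\in K$ and $\varphi_\gamma(\Delta)\cap\varphi_j(\Delta)=\emptyset$ for all $j\ne\gamma$. A horizontal block is a set $I=\{i_1,\dots,i_k\}\subset\Sigma$ with $\varphi_{i_j}(\omega_\beta)=\varphi_{i_{j+1}}(\omega_\alpha)$ for $1\le j\le k-1$, maximal with this property. *)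

(* Defs.v *)
From mathcomp Require Import all_boot all_order all_algebra.
From mathcomp Require Import all_classical all_reals all_analysis.
Set Implicit Arguments. Unset Strict Implicit. Unset Printing Implicit Defensive.
Import Order.TTheory GRing.Theory Num.Theory numFieldNormedType.Exports.
Local Open Scope classical_set_scope.
Local Open Scope ring_scope.

Section Gasket.
Variable R : realType.

Local Notation pt := (R * R)%type.

Definition om_a : pt := (0, 0).
Definition om_b : pt := (1, 0).
Definition om_g : pt := (2^-1, Num.sqrt 3 / 2).

Definition Delta : set pt :=
  [set z | exists a b c : R, [/\ 0 <= a, 0 <= b, 0 <= c, a + b + c = 1 &
     z = (a * om_a.1 + b * om_b.1 + c * om_g.1,
          a * om_a.2 + b * om_b.2 + c * om_g.2)]].

Definition phi (N : nat) (r : 'I_N -> R) (d : 'I_N -> pt) (j : 'I_N) (z : pt) : pt :=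
  (r j * (z.1 + (d j).1), r j * (z.2 + (d j).2)).

Definition vertices (f : pt -> pt) : set pt := [set f om_a; f om_b; f om_g].

Definition gasket_IFS (N : nat) (r : 'I_N -> R) (d : 'I_N -> pt) : Prop :=
  [/\ forall j, 0 < r j < 1,
      forall j, phi r d j @` Delta `<=` Delta &
      forall i j, i != j ->
        (phi r d i @` Delta) `&` (phi r d j @` Delta)
          `<=` vertices (phi r d i) `&` vertices (phi r d j)].

Definition is_attractor (N : nat) (r : 'I_N -> R) (d : 'I_N -> pt) (K : set pt) : Prop :=
  [/\ compact K, K !=set0 & K = \bigcup_(j in [set: 'I_N]) (phi r d j @` K)].

Definition top_isolated (N : nat) (r : 'I_N -> R) (d : 'I_N -> pt) (K : set pt) : Prop :=
  K om_g /\ exists g : 'I_N, phi r d g om_g = om_g /\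
    forall j, j != g -> (phi r d g @` Delta) `&` (phi r d j @` Delta) = set0.

Definition hnext (N : nat) (r : 'I_N -> R) (d : 'I_N -> pt) : rel 'I_N :=
  fun i j => phi r d i om_b == phi r d j om_a.

Definition hchain (N : nat) (r : 'I_N -> R) (d : 'I_N -> pt) (s : seq 'I_N) : Prop :=
  uniq s /\ sorted (hnext r d) s.

Definition horizontal_block (N : nat) (r : 'I_N -> R) (d : 'I_N -> pt) (I : set 'I_N) : Prop :=
  (exists s, hchain r d s /\ I = [set i | i \in s]) /\
  (forall s', hchain r d s' -> I `<=` [set i | i \in s'] -> [set i | i \in s'] `<=` I).

Definition same_horizontal_block (N : nat) (r : 'I_N -> R) (d : 'I_N -> pt) (i j : 'I_N) : Prop :=
  exists I, horizontal_block r d I /\ I i /\ I j.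

Definition line_segment (S : set pt) : Prop :=
  exists p q : pt, p != q /\
    S = [set z | exists t : R, [/\ 0 <= t, t <= 1 &
          z = ((1 - t) * p.1 + t * q.1, (1 - t) * p.2 + t * q.2)]].

End Gasket.

(* Main.v *)
Require Import Defs.
From mathcomp Require Import all_boot all_order all_algebra.
From mathcomp Require Import all_classical all_reals all_analysis.
From mathcomp Require Import ring lra.
Set Implicit Arguments. Unset Strict Implicit. Unset Printing Implicit Defensive.
Import Order.TTheory GRing.Theory Num.Theory numFieldNormedType.Exports.
Local Open Scope classical_set_scope.
Local Open Scope ring_scope.

Section Geo.
Variable R : realType.
Local Notation pt := (R * R)%type.
Local Notation oa := (om_a R).
Local Notation ob := (om_b R).
Local Notation og := (om_g R).
Local Notation s3 := (Num.sqrt (3 : R)).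
Local Notation Dl := (@Delta R).

Lemma s3_gt0 : 0 < s3. Proof. by rewrite sqrtr_gt0 ltr0n. Qed.
Lemma s3_sq : s3 * s3 = 3.
Proof. by rewrite -expr2 sqr_sqrtr // ler0n. Qed.

Definition hom (rho : R) (t : pt) (z : pt) : pt := (rho * z.1 + t.1, rho * z.2 + t.2).

Lemma Delta_hp (z : pt) : @Delta R z ->
  [/\ 0 <= z.2, z.2 <= s3 * z.1 & z.2 <= s3 * (1 - z.1)].
Proof.
case=> a [b [c [a0 b0 c0 abc ->]]] /=; rewrite /om_a /om_b /om_g /=.
have s0 := s3_gt0; have ss := s3_sq.
split; first by rewrite !mulr0 !add0r mulr_ge0 // divr_ge0 // ltW.
- have -> : a * 0 + b * 1 + c * 2^-1 = b + c / 2 by rewrite mulr0 add0r mulr1.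
  rewrite !mulr0 !add0r -subr_ge0.
  have -> : s3 * (b + c / 2) - c * (s3 / 2) = s3 * b by ring.
  by rewrite mulr_ge0 // ltW.
- have -> : a * 0 + b * 1 + c * 2^-1 = b + c / 2 by rewrite mulr0 add0r mulr1.
  rewrite !mulr0 !add0r -subr_ge0.
  have -> : s3 * (1 - (b + c / 2)) - c * (s3 / 2) = s3 * a.
    have -> : a = 1 - b - c by move: abc; lra.
    by field.
  by rewrite mulr_ge0 // ltW.
Qed.

Lemma Delta_hpI (z : pt) : 0 <= z.2 -> z.2 <= s3 * z.1 -> z.2 <= s3 * (1 - z.1) -> @Delta R z.
Proof.
move=> h1 h2 h3; have s0 := s3_gt0; have ss := s3_sq.
have s0' : s3 != 0 by rewrite gt_eqF.
exists (1 - z.1 - z.2 / s3), (z.1 - z.2 / s3), (2 * z.2 / s3).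
split.
- rewrite -(pmulr_rge0 _ s0) mulrBr mulrBr mulrCA divff // mulr1 mulr1; lra.
- rewrite -(pmulr_rge0 _ s0) mulrBr mulrCA divff // mulr1; lra.
- by rewrite divr_ge0 // ?mulr_ge0 // ltW.
- ring.
- case: z h1 h2 h3 => x y /= *; rewrite /om_a /om_b /om_g /=; congr (_, _).
  all: field.
  all: done.
Qed.


Definition corner (c : pt) := c = oa \/ c = ob \/ c = og.

Lemma Delta_oa : @Delta R oa.
Proof. apply: Delta_hpI; rewrite /om_a /= ?mulr0 ?subr0 ?mulr1 //; exact: ltW s3_gt0. Qed.
Lemma Delta_ob : @Delta R ob.
Proof. apply: Delta_hpI; rewrite /om_b /= ?mulr0 ?subrr ?mulr1 ?mulr0 //; exact: ltW s3_gt0. Qed.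
Lemma Delta_og : @Delta R og.
Proof.
have s0 := s3_gt0.
apply: Delta_hpI; rewrite /om_g /=.
- by rewrite divr_ge0 // ltW.
- by rewrite mulrC.
- have -> : 1 - 2^-1 = 2^-1 :> R by field.
  by rewrite mulrC.
Qed.

Lemma Delta_corner c : corner c -> @Delta R c.
Proof. by case=> [->|[->|->]]; [exact: Delta_oa|exact: Delta_ob|exact: Delta_og]. Qed.

Lemma pmul_eq0 (rho x : R) : 0 < rho -> rho * x = 0 -> x = 0.
Proof. by move=> r0 /eqP; rewrite mulf_eq0 gt_eqF //= => /eqP. Qed.

Lemma hom_inj rho t : 0 < rho -> injective (hom rho t).
Proof.
move=> r0 [x1 y1] [x2 y2] [] /= e1 e2.
have h1 : rho * (x1 - x2) = 0 by rewrite mulrBr; lra.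
have h2 : rho * (y1 - y2) = 0 by rewrite mulrBr; lra.
move/(pmul_eq0 r0)/eqP: h1; rewrite subr_eq0 => /eqP ->.
by move/(pmul_eq0 r0)/eqP: h2; rewrite subr_eq0 => /eqP ->.
Qed.

Lemma hom_corner rho t c z : 0 < rho -> hom rho t @` Dl `<=` Dl ->
  corner c -> Dl z -> hom rho t z = c -> z = c.
Proof.
move=> r0 sub cc Dz.
have [za zb zc] := Delta_hp Dz.
have /Delta_hp[ta tb tc] : Dl (hom rho t oa) by apply: sub; exists oa => //; exact: Delta_oa.
have /Delta_hp[ba bb bc] : Dl (hom rho t ob) by apply: sub; exists ob => //; exact: Delta_ob.
have /Delta_hp[ga gb gc] : Dl (hom rho t og) by apply: sub; exists og => //; exact: Delta_og.
have s0 := s3_gt0.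
move: ta tb tc ba bb bc ga gb gc.
rewrite /hom /om_a /om_b /om_g /= !mulr0 !mulr1 !add0r => ta tb tc ba bb bc ga gb gc.
case: z za zb zc Dz => x y /= za zb zc _.
case: cc => [->|[->|->]]; rewrite /om_a /om_b /om_g => -[e1 e2].
- have yr : 0 <= rho * y by rewrite mulr_ge0 // ltW.
  have y0 : y = 0 by apply: (pmul_eq0 r0); lra.
  have xr : 0 <= rho * x.
    apply: mulr_ge0; first exact: ltW.
    by rewrite -(pmulr_rge0 x s0); move: zb; rewrite y0.
  have t10 : 0 <= t.1.
    have t20 : t.2 = 0 by lra.
    by rewrite -(pmulr_rge0 t.1 s0); move: tb; rewrite t20.
  have x0 : x = 0 by apply: (pmul_eq0 r0); lra.
  by rewrite x0 y0.
- have yr : 0 <= rho * y by rewrite mulr_ge0 // ltW.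
  have y0 : y = 0 by apply: (pmul_eq0 r0); lra.
  have t20 : t.2 = 0 by lra.
  have h1 : 0 <= 1 - (rho + t.1).
    by rewrite -(pmulr_rge0 _ s0); move: bc; rewrite t20.
  have h2 : 0 <= 1 - x by rewrite -(pmulr_rge0 _ s0); move: zc; rewrite y0.
  have h3 : rho * (x - 1) = 1 - (rho + t.1) by rewrite mulrBr mulr1; lra.
  have h4 : 0 <= x - 1 by rewrite -(pmulr_rge0 _ r0) h3.
  by rewrite y0; congr (_, _); lra.
- have h1 : 2 * (rho * (Num.sqrt 3 / 2) + t.2) <= Num.sqrt 3.
    have := lerD gb gc; rewrite -mulrDr.
    have -> : rho / 2 + t.1 + (1 - (rho / 2 + t.1)) = 1 by ring.
    rewrite mulr1 => h; lra.
  have h2 : 2 * y <= Num.sqrt 3.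
    have := lerD zb zc; rewrite -mulrDr.
    have -> : x + (1 - x) = 1 by ring.
    rewrite mulr1 => h; lra.
  have h3 : rho * (y - Num.sqrt 3 / 2) = Num.sqrt 3 / 2 - (rho * (Num.sqrt 3 / 2) + t.2).
    rewrite mulrBr; lra.
  have h4 : 0 <= y - Num.sqrt 3 / 2.
    rewrite -(pmulr_rge0 _ r0) h3; lra.
  have yv : y = Num.sqrt 3 / 2 by lra.
  have h5 : 0 <= x - 1/2.
    rewrite -(pmulr_rge0 _ s0); rewrite yv in zb; rewrite mulrBr; lra.
  have h6 : 0 <= 1/2 - x.
    rewrite -(pmulr_rge0 _ s0); rewrite yv in zc; rewrite mulrBr; rewrite mulrBr mulr1 in zc; lra.
  by rewrite yv; congr (_, _); lra.
Qed.


Definition seg (c c2 : pt) (s : R) : pt := (c.1 + s * (c2.1 - c.1), c.2 + s * (c2.2 - c.2)).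

Lemma Delta_seg z1 z2 s : Dl z1 -> Dl z2 -> 0 <= s <= 1 -> Dl (seg z1 z2 s).
Proof.
move=> /Delta_hp[a1 b1 c1] /Delta_hp[a2 b2 c2] /andP[s0 s1].
have s1' : 0 <= 1 - s by rewrite subr_ge0.
apply: Delta_hpI; rewrite /seg /=.
- have -> : z1.2 + s * (z2.2 - z1.2) = (1 - s) * z1.2 + s * z2.2 by ring.
  by rewrite addr_ge0 // mulr_ge0.
- rewrite -subr_ge0.
  have -> : Num.sqrt 3 * (z1.1 + s * (z2.1 - z1.1)) - (z1.2 + s * (z2.2 - z1.2)) =
    (1 - s) * (Num.sqrt 3 * z1.1 - z1.2) + s * (Num.sqrt 3 * z2.1 - z2.2) by ring.
  by rewrite addr_ge0 // mulr_ge0 // subr_ge0.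
- rewrite -subr_ge0.
  have -> : Num.sqrt 3 * (1 - (z1.1 + s * (z2.1 - z1.1))) - (z1.2 + s * (z2.2 - z1.2)) =
    (1 - s) * (Num.sqrt 3 * (1 - z1.1) - z1.2) + s * (Num.sqrt 3 * (1 - z2.1) - z2.2) by ring.
  by rewrite addr_ge0 // mulr_ge0 // subr_ge0.
Qed.

Lemma hom_seg rho t c c2 s : hom rho t (seg c c2 s) =
  ((hom rho t c).1 + rho * s * (c2.1 - c.1), (hom rho t c).2 + rho * s * (c2.2 - c.2)).
Proof. rewrite /hom /seg /=; congr (_, _); ring. Qed.

Lemma corner_neq : [/\ oa != ob, oa != og & ob != og].
Proof.
have s0 := s3_gt0.
rewrite /om_a /om_b /om_g; split; apply/eqP; case.
- by move/eqP; rewrite eq_sym oner_eq0.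
- by move=> _ /eqP; rewrite eq_sym mulf_eq0 gt_eqF //= invr_eq0 pnatr_eq0.
- by move=> _ /eqP; rewrite eq_sym mulf_eq0 gt_eqF //= invr_eq0 pnatr_eq0.
Qed.

Lemma seg_not_corner c c2 s : 0 < s < 1 ->
  (c, c2) = (oa, ob) \/ (c, c2) = (ob, oa) \/ (c, c2) = (og, oa) ->
  ~ corner (seg c c2 s).
Proof.
move=> /andP[s0 s1] cc; have r0 := s3_gt0.
case: cc => [[-> ->]|[[-> ->]|[-> ->]]];
  rewrite /corner /seg /om_a /om_b /om_g /= => -[|[|]] [] => ?.
all: try lra.
all: try nra.
Qed.


Definition vert (f : pt -> pt) (x : pt) := exists c, corner c /\ x = f c.

Lemma same_corner_absurd rho1 t1 rho2 t2 c : 0 < rho1 -> 0 < rho2 -> corner c ->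
  hom rho1 t1 c = hom rho2 t2 c ->
  (forall x, (hom rho1 t1 @` Dl) x -> (hom rho2 t2 @` Dl) x -> vert (hom rho1 t1) x) -> False.
Proof.
move=> p1 p2 cc e ov.
have cc2 : exists c2, [/\ corner c2,
   (c, c2) = (oa, ob) \/ (c, c2) = (ob, oa) \/ (c, c2) = (og, oa) & True].
  case: cc => [->|[->|->]]; [exists ob|exists oa|exists oa]; split => //;
    by [left|right; left|right; right|rewrite /corner; auto].
case: cc2 => c2 [cc2 pair _].
have p12 : 0 < rho1 + rho2 by rewrite addr_gt0.
set s1 := rho2 / (2 * (rho1 + rho2)).
set s2 := rho1 / (2 * (rho1 + rho2)).
have s1r : 0 < s1 < 1.
  apply/andP; split; first by rewrite divr_gt0 // mulr_gt0.
  by rewrite ltr_pdivrMr ?mulr_gt0 // mul1r; lra.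
have s2r : 0 < s2 < 1.
  apply/andP; split; first by rewrite divr_gt0 // mulr_gt0.
  by rewrite ltr_pdivrMr ?mulr_gt0 // mul1r; lra.
have ee : rho1 * s1 = rho2 * s2.
  rewrite /s1 /s2; field; lra.
have D1 : Dl (seg c c2 s1).
  apply: Delta_seg; [exact: Delta_corner|exact: Delta_corner|].
  by case/andP: s1r => a b; rewrite ltW // ltW.
have D2 : Dl (seg c c2 s2).
  apply: Delta_seg; [exact: Delta_corner|exact: Delta_corner|].
  by case/andP: s2r => a b; rewrite ltW // ltW.
have E : hom rho1 t1 (seg c c2 s1) = hom rho2 t2 (seg c c2 s2).
  by rewrite !hom_seg e ee.
have [c3 [cc3 e3]] : vert (hom rho1 t1) (hom rho1 t1 (seg c c2 s1)).
  by apply: ov; [exists (seg c c2 s1)|rewrite E; exists (seg c c2 s2)].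
move/(hom_inj p1): e3 => e3.
by apply: (seg_not_corner s1r pair); rewrite e3.
Qed.

End Geo.

Section IFS.
Variables (R : realType) (N : nat) (r : 'I_N -> R) (d : 'I_N -> (R * R)%type)
  (K : set (R * R)).
Hypothesis HI : gasket_IFS r d.
Hypothesis HA : is_attractor r d K.
Local Notation pt := (R * R)%type.
Local Notation oa := (om_a R).
Local Notation ob := (om_b R).
Local Notation og := (om_g R).
Local Notation s3 := (Num.sqrt (3 : R)).
Local Notation Dl := (@Delta R).
Local Notation ph := (phi r d).

Definition tv j : pt := (r j * (d j).1, r j * (d j).2).
Lemma phi_hom j : ph j =1 hom (r j) (tv j).
Proof. by case=> x y; rewrite /phi /hom /=; congr (_, _); ring. Qed.

Lemma r_gt0 j : 0 < r j. Proof. by case: HI => /(_ j) /andP[]. Qed.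
Lemma r_lt1 j : r j < 1. Proof. by case: HI => /(_ j) /andP[]. Qed.

Lemma phi_sub j : ph j @` Dl `<=` Dl. Proof. by case: HI => _ /(_ j). Qed.

Lemma phi_hsub j : hom (r j) (tv j) @` Dl `<=` Dl.
Proof. by move=> x [z Dz <-]; rewrite -phi_hom; apply: phi_sub; exists z. Qed.

Lemma phi_ov i j x : i != j -> (ph i @` Dl) x -> (ph j @` Dl) x -> vert (ph i) x.
Proof.
case: HI => _ _ /[apply] H Di Dj.
have [] := H x (conj Di Dj).
case=> [[->|->]|->]; by [exists oa; split; [left|]|exists ob; split; [right; left|]
  |exists og; split; [right; right|]].
Qed.

Definition cmax : R := \big[Num.max/2^-1]_(j < N) r j.
Lemma r_le_cmax j : r j <= cmax.
Proof. by rewrite /cmax (bigD1 j) //= le_max lexx. Qed.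
Lemma cmax_gt0 : 0 < cmax.
Proof.
rewrite /cmax; apply: (big_ind (fun x => 0 < x)).
- by rewrite invr_gt0 ltr0n.
- by move=> x y x0 y0; rewrite lt_max x0.
- by move=> j _; exact: r_gt0.
Qed.
Lemma cmax_lt1 : cmax < 1.
Proof.
rewrite /cmax; apply: (big_ind (fun x => x < 1)).
- by rewrite invf_lt1 ?ltr0n // ltr1n.
- by move=> x y x0 y0; rewrite gt_max x0.
- by move=> j _; exact: r_lt1.
Qed.

Definition fw (w : seq 'I_N) : pt -> pt := foldr (fun j f => ph j \o f) id w.

Lemma fw_hom w : exists rho t, [/\ 0 < rho, rho <= cmax ^+ size w & fw w =1 hom rho t].
Proof.
elim: w => [|j w [rho [t [r0 rc fe]]]].
  by exists 1, (0, 0); split => // -[x y]; rewrite /hom /= !mul1r !addr0.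
exists (r j * rho), (r j * (t.1 + (d j).1), r j * (t.2 + (d j).2)); split.
- by rewrite mulr_gt0 // r_gt0.
- rewrite /= exprS; apply: ler_pM => //; [exact: ltW (r_gt0 j)|exact: ltW|exact: r_le_cmax].
- by move=> z; rewrite /= fe /phi /hom /=; congr (_, _); ring.
Qed.

Lemma fw_sub w : fw w @` Dl `<=` Dl.
Proof.
elim: w => [|j w IH] x [z Dz <-] //=.
by apply: phi_sub; exists (fw w z) => //; apply: IH; exists z.
Qed.

Lemma fw_ov w w' x : size w = size w' -> w != w' ->
  (fw w @` Dl) x -> (fw w' @` Dl) x -> vert (fw w) x.
Proof.
elim: w w' x => [|i u IH] [|j v] // x /eqP; rewrite eqSS => /eqP sz.
move=> neq [z Dz <-] [z' Dz' e] /=.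
have [rho [t [r0 _ fe]]] := fw_hom u.
have fsub : hom rho t @` Dl `<=` Dl.
  by move=> y [y' Dy' <-]; rewrite -fe; apply: fw_sub; exists y'.
have [ij|ij] := eqVneq i j.
- subst j.
  have uv : u != v by apply: contraNneq neq => ->.
  rewrite /= in e.
  have e2 : fw v z' = fw u z.
    by apply: (hom_inj (t:=tv i) (r_gt0 i)); rewrite -!phi_hom.
  have [c [cc ec]] : vert (fw u) (fw u z).
    by apply: (IH v) => //; exists z'.
  by exists c; split => //=; rewrite ec.
- have [c [cc ec]] : vert (ph i) (ph i (fw u z)).
    apply: phi_ov ij _ _.
    + by exists (fw u z) => //; apply: fw_sub; exists z.
    + by exists (fw v z') => //; apply: fw_sub; exists z'.
  move: ec; rewrite !phi_hom => /(hom_inj (r_gt0 i)) ec.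
  exists c; split => //=.
  have zc : z = c by apply: (hom_corner r0 fsub cc Dz); rewrite -fe.
  by rewrite zc phi_hom.
Qed.


Lemma small_pow (c e : R) : 0 <= c -> c < 1 -> 0 < e -> exists n, c ^+ n < e.
Proof.
move=> c0 c1 e0.
have cv := @cvg_geometric R 1 c.
have /cv : `|c| < 1 by rewrite ger0_norm.
move=> /cvgr_dist_lt /(_ e e0) [M _ HM].
exists M; have := HM M (leqnn M) => /=.
rewrite /geometric mul1r sub0r normrN ger0_norm //; exact: exprn_ge0.
Qed.

Lemma Kc : compact K. Proof. by case: HA. Qed.
Lemma K_phi z : K z -> exists j u, K u /\ z = ph j u.
Proof. by case: HA => _ _ E; rewrite {1}E => -[j _ [u Ku <-]]; exists j, u. Qed.
Lemma phi_K j u : K u -> K (ph j u).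
Proof. by case: HA => _ _ E Ku; rewrite {1}E; exists j => //; exists u. Qed.

Lemma K_bnd : exists M : R, 0 <= M /\ forall x, K x -> `|x.1| <= M /\ `|x.2| <= M.
Proof.
have /compact_bounded [M0 [_ HM]] := Kc.
exists (Num.max (M0 + 1) 0); split; first by rewrite le_max lexx orbT.
move=> x Kx.
have hM : M0 < Num.max (M0 + 1) 0 by rewrite lt_max ltrDl ltr01.
have := HM _ hM x Kx.
move=> /= h; move: h; rewrite (prod_normE x) ge_max => /andP[]; split => //.
Qed.

Lemma K_halfplane (l : pt -> R) (p : pt) : (forall z, Dl z -> l z <= 0) -> Dl p ->
  (forall j u, l (ph j u) = r j * l u + l (ph j p)) ->
  (exists M, forall z, K z -> l z <= M) -> forall z, K z -> l z <= 0.
Proof.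
move=> lD Dp lphi [M0 HM].
pose M := Num.max M0 0.
have M0le : 0 <= M by rewrite le_max lexx orbT.
have Hn n : forall z, K z -> l z <= cmax ^+ n * M.
  elim: n => [|n IH] z Kz.
    by rewrite expr0 mul1r (le_trans (HM z Kz)) // le_max lexx.
  have [j [u [Ku ->]]] := K_phi Kz.
  rewrite lphi.
  have h1 : l (ph j p) <= 0 by apply: lD; apply: phi_sub; exists p.
  have h2 : r j * l u <= r j * (cmax ^+ n * M) by rewrite ler_wpM2l ?IH // ltW // r_gt0.
  have h3 : r j * (cmax ^+ n * M) <= cmax ^+ n.+1 * M.
    rewrite exprS -mulrA; apply: ler_wpM2r; first by rewrite mulr_ge0 // exprn_ge0 // ltW // cmax_gt0.
    exact: r_le_cmax.
  lra.
move=> z Kz; rewrite leNgt; apply/negP => lz.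
have [n hn] := small_pow (ltW cmax_gt0) cmax_lt1 (divr_gt0 lz (ltr_wpDl M0le ltr01 : 0 < M + 1)).
have := Hn n z Kz.
have cn0 : 0 <= cmax ^+ n by rewrite exprn_ge0 // ltW // cmax_gt0.
have : cmax ^+ n * (M + 1) < l z by rewrite -ltr_pdivlMr // ltr_wpDl.
have : cmax ^+ n * M <= cmax ^+ n * (M + 1) by rewrite ler_wpM2l // lerDl.
lra.
Qed.

Lemma K_sub : K `<=` Dl.
Proof.
have [M [M0 HM]] := K_bnd.
have s0 := s3_gt0 R.
move=> z Kz; apply: Delta_hpI.
- rewrite -oppr_le0.
  apply: (@K_halfplane (fun z => - z.2) oa) => //.
  + by move=> y /Delta_hp[]; rewrite oppr_le0.
  + exact: Delta_oa.
  + by move=> j u; rewrite /phi /om_a /=; ring.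
  + exists M => y /HM [_ h]; rewrite (le_trans _ h) // -normrN ler_norm //.
- rewrite -subr_le0.
  apply: (@K_halfplane (fun z => z.2 - s3 * z.1) oa) => //.
  + by move=> y /Delta_hp[_ h _]; rewrite subr_le0.
  + exact: Delta_oa.
  + by move=> j u; rewrite /phi /om_a /=; ring.
  + exists (M + s3 * M) => y /HM [h1 h2].
    have : y.2 <= M by rewrite (le_trans _ h2) // ler_norm.
    have : - y.1 <= M by rewrite (le_trans _ h1) // -normrN ler_norm.
    move=> a b; rewrite lerD // -mulrN ler_wpM2l // ltW //.
- rewrite -subr_le0.
  apply: (@K_halfplane (fun z => z.2 - s3 * (1 - z.1)) ob) => //.
  + by move=> y /Delta_hp[_ _ h]; rewrite subr_le0.
  + exact: Delta_ob.
  + by move=> j u; rewrite /phi /om_b /=; ring.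
  + exists (M + s3 * M) => y /HM [h1 h2].
    have : y.2 <= M by rewrite (le_trans _ h2) // ler_norm.
    have : y.1 <= M by rewrite (le_trans _ h1) // ler_norm.
    move=> a b; have : s3 * y.1 <= s3 * M by rewrite ler_wpM2l // ltW.
    rewrite mulrBr mulr1; lra.
Qed.


Lemma fw_K w u : K u -> K (fw w u).
Proof. by elim: w => [|j w IH] //= Ku; apply: phi_K; apply: IH. Qed.

Lemma K_cover n z : K z -> exists (w : n.-tuple 'I_N) u, K u /\ z = fw w u.
Proof.
elim: n z => [|n IH] z Kz; first by exists [tuple], z.
have [j [u [Ku ->]]] := K_phi Kz.
have [w [v [Kv ->]]] := IH u Ku.
by exists [tuple of j :: w], v.
Qed.

Lemma phi_corner_fix j c c' : corner c -> corner c' -> ph j c = c' -> c = c'.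
Proof.
move=> cc cc' e; apply: (hom_corner (r_gt0 j) (@phi_hsub j) cc' (Delta_corner cc)).
by rewrite -phi_hom.
Qed.

Lemma phi_corner_in j c : corner c -> (ph j @` Dl) c -> ph j c = c.
Proof.
move=> cc [z Dz e]; have := e; rewrite phi_hom => /(hom_corner (r_gt0 j) (@phi_hsub j) cc Dz) zc.
by rewrite -{1}zc.
Qed.

Lemma same_corner_idx i j c : corner c -> ph i c = ph j c -> i = j.
Proof.
move=> cc e; apply/eqP; apply/negP => /negP ij; apply: (@same_corner_absurd R (r i) (tv i) (r j) (tv j) c (r_gt0 i) (r_gt0 j) cc).
- by rewrite -!phi_hom.
- move=> x [z Dz ez] [z' Dz' ez'].
  have [c' [cc' ->]] : vert (ph i) x.
    by apply: (phi_ov ij); [exists z; rewrite ?phi_hom|exists z'; rewrite ?phi_hom].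
  by exists c'; rewrite -phi_hom.
Qed.

Lemma two_fix j c c' : corner c -> corner c' -> c != c' -> ph j c = c -> ph j c' = c' -> False.
Proof.
move=> cc cc' ne e e'.
have rl := r_lt1 j; have r0 := r_gt0 j.
move: ne e e'; rewrite !phi_hom /hom /tv.
have s0 := s3_gt0 R.
case: cc => [->|[->|->]]; case: cc' => [->|[->|->]]; rewrite ?eqxx // /om_a /om_b /om_g /= => _ -[e1 e2] [e3 e4].
all: rewrite ?mulr0 ?mulr1 ?add0r in e1 e2 e3 e4.
all: lra.
Qed.

Lemma phi_inj j : injective (ph j).
Proof. by move=> x y; rewrite !phi_hom => /(hom_inj (r_gt0 j)). Qed.

Lemma fw_inj w : injective (fw w).
Proof. by have [rho [t [r0 _ fe]]] := fw_hom w; move=> x y; rewrite !fe => /(hom_inj r0). Qed.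

Lemma Delta_box z : Dl z -> [/\ 0 <= z.1, z.1 <= 1, 0 <= z.2 & z.2 <= 1].
Proof.
move=> /Delta_hp [h1 h2 h3]; have s0 := s3_gt0 R; have ss := s3_sq R.
have s2 : Num.sqrt 3 <= 2 :> R by nra.
split; nra.
Qed.

Lemma fw_close w u v : Dl u -> Dl v ->
  `|(fw w u).1 - (fw w v).1| <= cmax ^+ size w /\ `|(fw w u).2 - (fw w v).2| <= cmax ^+ size w.
Proof.
move=> /Delta_box[a1 a2 a3 a4] /Delta_box[b1 b2 b3 b4].
have [rho [t [r0 rc fe]]] := fw_hom w.
rewrite !fe /hom /=.
have -> : rho * u.1 + t.1 - (rho * v.1 + t.1) = rho * (u.1 - v.1) by ring.
have -> : rho * u.2 + t.2 - (rho * v.2 + t.2) = rho * (u.2 - v.2) by ring.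
rewrite !normrM gtr0_norm //.
have n1 : `|u.1 - v.1| <= 1 by rewrite ler_norml; apply/andP; split; lra.
have n2 : `|u.2 - v.2| <= 1 by rewrite ler_norml; apply/andP; split; lra.
by split; apply: le_trans rc; rewrite -[X in _ <= X]mulr1 ler_wpM2l // ltW.
Qed.

Lemma close_eq (x y : R) : (forall n, `|x - y| <= 2 * cmax ^+ n) -> x = y.
Proof.
move=> H; apply/eqP; rewrite -subr_eq0 -normr_eq0; apply/eqP.
apply/le_anti; rewrite normr_ge0 andbT; rewrite leNgt; apply/negP => h.
have [n hn] := small_pow (ltW cmax_gt0) cmax_lt1 (divr_gt0 h (ltr0n R 2)).
have := H n.
have : cmax ^+ n * 2 < `|x - y| by rewrite -ltr_pdivlMr ?ltr0n.
lra.
Qed.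


Lemma hom_cont (rho : R) (t : pt) : continuous (hom rho t).
Proof.
move=> z.
have -> : hom rho t = (fun z => rho *: z + t) by apply: funext => -[a b].
apply: continuousD; last exact: cvg_cst.
exact: continuousZr.
Qed.

Lemma node_closed w X : compact X -> closed (fw w @` X).
Proof.
move=> cX; have [rho [t [_ _ fe]]] := fw_hom w.
have -> : fw w = hom rho t by apply: funext.
apply: compact_closed; first exact: norm_hausdorff.
apply: continuous_compact => //; apply: continuous_subspaceT; exact: hom_cont.
Qed.

Lemma sep (T : Type) (pi : pt -> T) (X : 'I_3 -> set pt) (cr : 'I_3 -> pt) :
  (forall i, compact (X i)) -> (forall i, X i `<=` K) ->
  (forall z, K z -> exists i, X i z) ->
  (forall i j z, X i z -> X j z -> i = j) ->
  (forall i c, corner c -> X i c -> forall rho t, 0 < rho ->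
     pi (hom rho t c) = pi (hom rho t (cr i))) ->
  forall C, connected C -> C `<=` K -> forall p q, C p -> C q -> forall n,
   exists (w0 w : n.-tuple 'I_N) (i0 i : 'I_3),
     [/\ (fw w0 @` X i0) p, (fw w @` X i) q & pi (fw w0 (cr i0)) = pi (fw w (cr i))].
Proof.
move=> Xc XK Xcov Xdis Xlab C Cc CK p q Cp Cq n.
have [w0 [u [Ku pe]]] := K_cover n (CK p Cp).
have [i0 Xu] := Xcov u Ku.
pose node (k : (n.-tuple 'I_N * 'I_3)%type) := fw k.1 @` X k.2.
pose lab (k : (n.-tuple 'I_N * 'I_3)%type) := pi (fw k.1 (cr k.2)).
pose l0 := lab (w0, i0).
pose U := \bigcup_(k in [set k | lab k = l0]) node k.
pose V := \bigcup_(k in [set k | lab k <> l0]) node k.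
have clN k : closed (node k) by apply: node_closed.
have cU : closed U by apply: closed_bigcup; [exact: finite_finset|move=> k _; exact: clN].
have cV : closed V by apply: closed_bigcup; [exact: finite_finset|move=> k _; exact: clN].
have key : forall k k' z, node k z -> node k' z -> lab k = lab k'.
  move=> [w i] [w' i'] z [u1 X1 e1] [u2 X2 e2]; rewrite /lab /=.
  have [ww|ww] := eqVneq w w'.
  - subst w'.
    have uu : u1 = u2 by apply: (@fw_inj w); rewrite e1 e2.
    subst u2; have ii := Xdis _ _ _ X1 X2; rewrite /= in ii; by rewrite ii.
  - have sz : size w = size w' by rewrite !size_tuple.
    have nw : val w != val w'.
      by apply: contraNneq ww => h; apply/eqP; apply: val_inj.
    have D1 : (fw w @` Dl) z by exists u1 => //; apply: K_sub; exact: XK X1.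
    have D2 : (fw w' @` Dl) z by exists u2 => //; apply: K_sub; exact: XK X2.
    have [c [cc ec]] := fw_ov sz nw D1 D2.
    have nw' : val w' != val w by rewrite eq_sym.
    have [c' [cc' ec']] := fw_ov (esym sz) nw' D2 D1.
    have uc : u1 = c by apply: (@fw_inj w); rewrite e1.
    have uc' : u2 = c' by apply: (@fw_inj w'); rewrite e2.
    have [rho [t [r0 _ fe]]] := fw_hom w.
    have [rho' [t' [r0' _ fe']]] := fw_hom w'.
    rewrite fe fe' -(Xlab i c cc _ rho t r0); last by rewrite -uc.
    rewrite -(Xlab i' c' cc' _ rho' t' r0'); last by rewrite -uc'.
    by rewrite -fe -fe' -ec -ec'.
have CU : C `&` U = C `&` ~` V.
  apply/seteqP; split => z [Cz Hz]; split => //.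
  - case: Hz => k /= lk nk [k' /= lk' nk'].
    by apply: lk'; rewrite -lk; apply: key nk' nk.
  - have [w [v [Kv ze]]] := K_cover n (CK z Cz).
    have [i Xv] := Xcov v Kv.
    have nk : node (w, i) z by exists v.
    have [lk|lk] := pselect (lab (w, i) = l0); first by exists (w, i).
    by exfalso; apply: Hz; exists (w, i).
have pU : U p by exists (w0, i0) => //; exists u.
have CUe : C `&` U = C.
  apply: Cc.
  - by exists p.
  - by exists (~` V) => //; rewrite openC.
  - by exists U.
have : (C `&` U) q by rewrite CUe.
case=> _ [[w i] /= lk [v Xv qe]].
by exists w0, w, i0, i; split => //; [exists u|exists v].
Qed.


Lemma sep_conseq (X : 'I_3 -> set pt) (cr : 'I_3 -> pt) (pi : pt -> R) (k : bool) :
  (forall i, Dl (cr i)) -> (forall i, X i `<=` K) ->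
  (forall z, pi z = if k then z.1 else z.2) ->
  forall p q n, (exists (w0 w : n.-tuple 'I_N) (i0 i : 'I_3),
     [/\ (fw w0 @` X i0) p, (fw w @` X i) q & pi (fw w0 (cr i0)) = pi (fw w (cr i))]) ->
  `|pi p - pi q| <= 2 * cmax ^+ n.
Proof.
move=> crD XK piE p q n [w0 [w [i0 [i [[u Xu <-] [v Xv <-] e]]]]].
have Du : Dl u by apply: K_sub; exact: XK Xu.
have Dv : Dl v by apply: K_sub; exact: XK Xv.
have [a1 a2] := fw_close w0 Du (crD i0).
have [b1 b2] := fw_close w Dv (crD i).
rewrite !size_tuple in a1 a2 b1 b2.
have -> : pi (fw w0 u) - pi (fw w v) =
  (pi (fw w0 u) - pi (fw w0 (cr i0))) + (pi (fw w (cr i)) - pi (fw w v)) by rewrite e; ring.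
rewrite (le_trans (ler_normD _ _)) // mulr2n mulrDl mul1r lerD //.
- by rewrite !piE; case: (k).
- by rewrite distrC !piE; case: (k).
Qed.

Lemma compact_fin (I : finType) (P : set I) (F : I -> set pt) :
  (forall i, compact (F i)) -> compact (\bigcup_(i in P) F i).
Proof.
move=> cF; rewrite -bigsetU_fset_set; last exact: finite_finset.
by apply: bigsetU_compact => i _.
Qed.

Lemma phi_compact j X : compact X -> compact (ph j @` X).
Proof.
move=> cX; have -> : ph j = hom (r j) (tv j) by apply: funext; exact: phi_hom.
apply: continuous_compact => //; apply: continuous_subspaceT; exact: hom_cont.
Qed.


Definition X3 (A B C : set pt) (i : 'I_3) : set pt :=
  if val i == 0%N then A else if val i == 1%N then B else C.
Definition p3 (A B C : pt) (i : 'I_3) : pt :=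
  if val i == 0%N then A else if val i == 1%N then B else C.

Section Part1.
Variable J0 : set 'I_N.
Hypothesis H1 : forall j k, J0 j -> ~ J0 k -> ph j @` Dl `&` ph k @` Dl = set0.
Hypothesis H2 : K og -> exists g, ~ J0 g /\ ph g og = og.
Hypothesis H3 : forall j, ph j oa = oa -> J0 j.
Hypothesis H3' : forall j, ph j ob = ob -> J0 j.

Definition K0 := \bigcup_(j in J0) ph j @` K.
Definition TT := \bigcup_(j in ~` J0) ph j @` K.

Lemma K0_compact : compact K0.
Proof. by apply: compact_fin => j; apply: phi_compact; exact: Kc. Qed.
Lemma TT_compact : compact TT.
Proof. by apply: compact_fin => j; apply: phi_compact; exact: Kc. Qed.
Lemma K0_K : K0 `<=` K. Proof. by move=> z [j _ [u Ku <-]]; exact: phi_K. Qed.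
Lemma TT_K : TT `<=` K. Proof. by move=> z [j _ [u Ku <-]]; exact: phi_K. Qed.
Lemma K0TT_cover z : K z -> K0 z \/ TT z.
Proof.
move=> /K_phi [j [u [Ku ->]]].
have [Jj|Jj] := pselect (J0 j); [left|right]; by exists j => //; exists u.
Qed.
Lemma K0TT_dis z : K0 z -> TT z -> False.
Proof.
move=> [j Jj [u Ku e]] [k Jk [v Kv e']].
have : (ph j @` Dl `&` ph k @` Dl) z.
  split; [exists u => //|exists v => //]; exact: K_sub.
by rewrite H1.
Qed.

Lemma K0_corner c : corner c -> K0 c -> c = oa \/ c = ob.
Proof.
move=> cc K0c; case: cc => [->|[->|cg]]; [by left|by right|exfalso].
subst c; have [g [Jg eg]] := H2 (K0_K K0c).
case: K0c => j Jj [u Ku e].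
have : (ph j @` Dl `&` ph g @` Dl) og.
  split; first by exists u => //; exact: K_sub.
  by exists og; [exact: Delta_og|].
by rewrite H1.
Qed.

Lemma TT_corner c : corner c -> TT c -> c = og.
Proof.
move=> cc [k Jk [u Ku e]]; case: cc => [ca|[cb|//]]; exfalso; apply: Jk.
- apply: H3; subst c; apply: (@phi_corner_in k oa); first by left.
  by exists u => //; exact: K_sub.
- apply: H3'; subst c; apply: (@phi_corner_in k ob); first by right; left.
  by exists u => //; exact: K_sub.
Qed.

Lemma part1_sep :
  [/\ forall i, compact (X3 K0 set0 TT i), forall i, X3 K0 set0 TT i `<=` K,
   forall z, K z -> exists i, X3 K0 set0 TT i z,
   forall i j z, X3 K0 set0 TT i z -> X3 K0 set0 TT j z -> i = j &
   forall i c, corner c -> X3 K0 set0 TT i c -> forall rho t, 0 < rho ->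
     (hom rho t c).2 = (hom rho t (p3 oa ob og i)).2].
Proof.
split.
- by case=> [[|[|[|m]]] Hm]; rewrite /X3 /=; [exact: K0_compact|exact: compact0|exact: TT_compact|].
- by case=> [[|[|[|m]]] Hm]; rewrite /X3 /=; [exact: K0_K| |exact: TT_K|].
- move=> z Kz; case: (K0TT_cover Kz) => h.
  + by exists (Ordinal (isT : (0 < 3)%N)).
  + by exists (Ordinal (isT : (2 < 3)%N)).
- case=> [[|[|[|m]]] Hm]; case=> [[|[|[|m']]] Hm'] z //=; rewrite /X3 /=;
    try (by move=> *; apply: val_inj);
    by move=> a b; exfalso; apply: (@K0TT_dis z).
- case=> [[|[|[|m]]] Hm] c cc //=; rewrite /X3 /p3 /= => Xc rho t r0.
  all: try (by case: (K0_corner cc Xc) => ->; rewrite /om_a /om_b).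
  all: try (by case: Xc).
  all: by rewrite (TT_corner cc Xc).
Qed.

Lemma horizontal C : connected C -> C `<=` K -> forall p q, C p -> C q -> p.2 = q.2.
Proof.
move=> Cc CK p q Cp Cq.
have [h1 h2 h3 h4 h5] := part1_sep.
apply: close_eq => n.
apply: (@sep_conseq (X3 K0 set0 TT) (p3 oa ob og) (fun z => z.2) false) => //.
- by case=> [[|[|[|m]]] Hm]; rewrite /p3 /=; [exact: Delta_oa|exact: Delta_ob|exact: Delta_og|].
exact: (@sep _ (fun z : pt => z.2) (X3 K0 set0 TT) (p3 oa ob og) h1 h2 h3 h4 h5 C Cc CK p q Cp Cq n).
Qed.


Section Part2.
Variables alpha beta : 'I_N.
Hypothesis Ha : ph alpha oa = oa.
Hypothesis Hb : ph beta ob = ob.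
Local Notation hn := (hnext r d).
Hypothesis Hnc : ~ connect hn alpha beta.
Hypothesis Koa : K oa.
Hypothesis Kob : K ob.

Lemma connect_last (e : rel 'I_N) x y : connect e x y -> x != y -> exists z, connect e x z /\ e z y.
Proof.
case/connectP => p pth ->; case/lastP: p pth => [|p z] /=; first by rewrite eqxx.
rewrite rcons_path last_rcons => /andP[pth ez] _; exists (last x p); split => //.
by apply/connectP; exists p.
Qed.

Lemma connect_first (e : rel 'I_N) x y : connect e x y -> x != y -> exists z, e x z /\ connect e z y.
Proof.
case/connectP => -[|z p] /=; first by move=> _ ->; rewrite eqxx.
move=> /andP[ez pth] -> _; exists z; split => //.
by apply/connectP; exists p.
Qed.

Definition Ra j := connect hn alpha j.
Definition Rb j := connect hn j beta.

Lemma ab_link k k' c c' : (c = oa \/ c = ob) -> (c' = oa \/ c' = ob) -> ph k c = ph k' c' ->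
  k = k' \/ hn k k' \/ hn k' k.
Proof.
move=> cc cc' e.
have crn c0 : (c0 = oa \/ c0 = ob) -> corner c0 by case=> ->; [left|right; left].
case: cc cc' e => -> [] -> e.
- by left; apply: (@same_corner_idx _ _ oa) => //; left.
- by right; right; rewrite /hnext e.
- by right; left; rewrite /hnext e.
- by left; apply: (@same_corner_idx _ _ ob) => //; right; left.
Qed.

Lemma no_pred_alpha j : ~ hn j alpha.
Proof.
move=> /eqP; rewrite Ha => /(@phi_corner_fix j ob oa) h.
have [h1 _ _] := corner_neq R.
by move/eqP: h1; apply; rewrite h //; [right; left|left].
Qed.

Lemma no_succ_beta j : ~ hn beta j.
Proof.
move=> /eqP; rewrite Hb => /esym /(@phi_corner_fix j oa ob) h.
have [h1 _ _] := corner_neq R.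
by move/eqP: h1; apply; rewrite h //; [left|right; left].
Qed.

Lemma Ra_closed j k : hn j k -> Ra j = Ra k.
Proof.
move=> jk; apply/idP/idP => h.
- by apply: connect_trans h (connect1 jk).
- have [ak|ak] := eqVneq alpha k; first by subst k; exfalso; exact: (@no_pred_alpha j).
  have [k0 [a0 k0k]] := connect_last h ak.
  have : ph k0 ob = ph j ob by move/eqP: jk ->; move/eqP: k0k ->.
  by move/(@same_corner_idx _ _ ob (or_intror (or_introl erefl))) => <-.
Qed.

Lemma Rb_closed j k : hn j k -> Rb j = Rb k.
Proof.
move=> jk; apply/idP/idP => h.
- have [jb|jb] := eqVneq j beta; first by subst j; exfalso; exact: (@no_succ_beta k).
  have [k0 [jk0 k0b]] := connect_first h jb.
  have : ph k0 oa = ph k oa by move/eqP: jk <-; move/eqP: jk0 <-.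
  by move/(@same_corner_idx _ _ oa (or_introl erefl)) => <-.
- by apply: connect_trans (connect1 jk) h.
Qed.

Lemma link_closed k k' : k = k' \/ hn k k' \/ hn k' k -> Ra k = Ra k' /\ Rb k = Rb k'.
Proof.
case=> [->|[h|h]] //; first by rewrite (Ra_closed h) (Rb_closed h).
by rewrite (Ra_closed h) (Rb_closed h).
Qed.


Definition Va j := exists k, Ra k /\ (ph j og = ph k oa \/ ph j og = ph k ob).
Definition Vb j := exists k, Rb k /\ (ph j og = ph k oa \/ ph j og = ph k ob).

Lemma V_iff j k c : (c = oa \/ c = ob) -> ph j og = ph k c -> (Va j <-> Ra k) /\ (Vb j <-> Rb k).
Proof.
move=> cc e; split; split.
- case=> k' [Rk' e']; have [-> _] : Ra k = Ra k' /\ Rb k = Rb k'.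
    by apply: link_closed; case: e' => e'; [apply: (ab_link cc (or_introl erefl))|
      apply: (ab_link cc (or_intror erefl))]; rewrite -e -e'.
  exact: Rk'.
- by move=> Rk; exists k; split => //; case: cc => <-; [left|right].
- case=> k' [Rk' e']; have [_ ->] : Ra k = Ra k' /\ Rb k = Rb k'.
    by apply: link_closed; case: e' => e'; [apply: (ab_link cc (or_introl erefl))|
      apply: (ab_link cc (or_intror erefl))]; rewrite -e -e'.
  exact: Rk'.
- by move=> Rk; exists k; split => //; case: cc => <-; [left|right].
Qed.

Definition i0 : 'I_3 := Ordinal (isT : (0 < 3)%N).
Definition i1 : 'I_3 := Ordinal (isT : (1 < 3)%N).
Definition i2 : 'I_3 := Ordinal (isT : (2 < 3)%N).

Definition cls (k : 'I_N * bool) : 'I_3 :=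
  if k.2 then (if `[< Va k.1 >] then i0 else if `[< Vb k.1 >] then i1 else i2)
  else (if Ra k.1 then i0 else if Rb k.1 then i1 else i2).

Definition Y (b : bool) := if b then TT else K0.

Lemma Y_K b : Y b `<=` K. Proof. by case: b; [exact: TT_K|exact: K0_K]. Qed.

Lemma node_corner j b y c : Y b y -> corner c -> ph j y = ph j c -> Y b c.
Proof. by move=> Yy cc /phi_inj <-. Qed.

Lemma cls_TF j k c : (c = oa \/ c = ob) -> ph j og = ph k c -> cls (j, true) = cls (k, false).
Proof.
move=> cc e; have [[a1 a2] [b1 b2]] := V_iff cc e.
rewrite /cls /=.
have -> : `[< Va j >] = Ra k by apply/idP/idP => [/asboolP/a1|/a2/asboolP].
by have -> : `[< Vb j >] = Rb k by apply/idP/idP => [/asboolP/b1|/b2/asboolP].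
Qed.

Lemma cls_contact j b k b' z : (ph j @` Y b) z -> (ph k @` Y b') z -> cls (j, b) = cls (k, b').
Proof.
move=> [y Yy ey] [y' Yy' ey'].
have [jk|jk] := eqVneq j k.
  subst k; have yy : y = y' by apply: (@phi_inj j); rewrite ey ey'.
  subst y'; case: b b' Yy Yy' => -[] //= a b'; by exfalso; apply: (@K0TT_dis y).
have Dy : Dl y by apply: K_sub; exact: Y_K Yy.
have Dy' : Dl y' by apply: K_sub; exact: Y_K Yy'.
have [c [cc ec]] : vert (ph j) z by apply: (phi_ov jk); [exists y|exists y'].
have kj : k != j by rewrite eq_sym.
have [c' [cc' ec']] : vert (ph k) z by apply: (phi_ov kj); [exists y'|exists y].
have Yc : Y b c by apply: (@node_corner j b y c Yy cc); rewrite ey.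
have Yc' : Y b' c' by apply: (@node_corner k b' y' c' Yy' cc'); rewrite ey'.
have ecc : ph j c = ph k c' by rewrite -ec -ec'.
case: b b' Yy Yy' Yc Yc' => -[] /= _ _ Yc Yc'.
- have e1 := TT_corner cc Yc; have e2 := TT_corner cc' Yc'.
  subst c c'; by case/eqP: jk; apply: (@same_corner_idx _ _ og) => //; right; right.
- by rewrite (TT_corner cc Yc) in ecc; apply: (cls_TF (K0_corner cc' Yc')).
- by rewrite (TT_corner cc' Yc') in ecc; apply/esym; apply: (cls_TF (K0_corner cc Yc)).
- have [e1 e2] := link_closed (ab_link (K0_corner cc Yc) (K0_corner cc' Yc') ecc).
  by rewrite /cls /= e1 e2.
Qed.


Definition XX (i : 'I_3) := \bigcup_(k in [set k : 'I_N * bool | cls k = i]) ph k.1 @` Y k.2.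

Lemma Ra_alpha : Ra alpha. Proof. exact: connect0. Qed.
Lemma Rb_beta : Rb beta. Proof. exact: connect0. Qed.
Lemma Ra_beta : ~~ Ra beta. Proof. by apply/negP. Qed.

Lemma part2_sep :
  [/\ forall i, compact (XX i), forall i, XX i `<=` K,
   forall z, K z -> exists i, XX i z,
   forall i j z, XX i z -> XX j z -> i = j &
   forall i c, corner c -> XX i c -> c = p3 oa ob og i].
Proof.
split.
- move=> i; apply: compact_fin => k; apply: phi_compact.
  by case: k.2; [exact: TT_compact|exact: K0_compact].
- by move=> i z [k _ [u Yu <-]]; apply: phi_K; exact: Y_K Yu.
- move=> z /K_phi [j [u [Ku ->]]].
  case: (K0TT_cover Ku) => h.
  + by exists (cls (j, false)); exists (j, false) => //; exists u.
  + by exists (cls (j, true)); exists (j, true) => //; exists u.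
- move=> i i' z [[j b] /= <- nj] [[k b'] /= <- nk].
  exact: (cls_contact nj nk).
- move=> i c cc [[j b] /= <- [y Yy ey]].
  have Dc : (ph j @` Dl) c by exists y => //; apply: K_sub; exact: Y_K Yy.
  have fc := phi_corner_in cc Dc.
  have yc : y = c by apply: (@phi_inj j); rewrite ey fc.
  subst y.
  case: b Yy => /= Yc.
  + have cg := TT_corner cc Yc; subst c.
    rewrite /cls /=.
    have nV : forall k, ~ (ph j og = ph k oa \/ ph j og = ph k ob).
      move=> k; rewrite fc => -[] /esym /(@phi_corner_fix k) h.
      * have [_ h1 _] := corner_neq R.
        by move/eqP: h1; apply; apply: h; [left|right; right].
      * have [_ _ h1] := corner_neq R.
        by move/eqP: h1; apply; apply: h; [right; left|right; right].
    have -> : `[< Va j >] = false by apply/asboolP => -[k [_ /nV]].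
    by have -> : `[< Vb j >] = false by apply/asboolP => -[k [_ /nV]].
  + case: (K0_corner cc Yc) => ce; subst c.
    * have ja : j = alpha by apply: (@same_corner_idx _ _ oa); [left|rewrite fc Ha].
      by subst j; rewrite /cls /= Ra_alpha.
    * have jb : j = beta by apply: (@same_corner_idx _ _ ob); [right; left|rewrite fc Hb].
      by subst j; rewrite /cls /= (negbTE Ra_beta) Rb_beta.
Qed.

Lemma total_disc C : connected C -> C `<=` K -> forall p q, C p -> C q -> p = q.
Proof.
move=> Cc CK p q Cp Cq.
have [h1 h2 h3 h4 h5] := part2_sep.
have crD : forall i, Dl (p3 oa ob og i).
  by case=> [[|[|[|m]]] Hm]; rewrite /p3 /=; [exact: Delta_oa|exact: Delta_ob|exact: Delta_og|].
have e1 : p.1 = q.1.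
  apply: close_eq => n.
  apply: (@sep_conseq XX (p3 oa ob og) (fun z => z.1) true) => //.
  apply: (@sep _ (fun z : pt => z.1) XX (p3 oa ob og) h1 h2 h3 h4 _ C Cc CK p q Cp Cq n).
  by move=> i c cc Xc rho t r0; rewrite (h5 i c cc Xc).
have e2 : p.2 = q.2.
  apply: close_eq => n.
  apply: (@sep_conseq XX (p3 oa ob og) (fun z => z.2) false) => //.
  apply: (@sep _ (fun z : pt => z.2) XX (p3 oa ob og) h1 h2 h3 h4 _ C Cc CK p q Cp Cq n).
  by move=> i c cc Xc rho t r0; rewrite (h5 i c cc Xc).
by case: p q e1 e2 {Cp Cq} => a b [a' b'] /= -> ->.
Qed.

End Part2.

End Part1.

End IFS.

Section Seg.
Variable R : realType.
Local Notation pt := (R * R)%type.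

Lemma fst_cont : continuous (fun z : pt => z.1).
Proof. move=> z; exact: cvg_fst. Qed.

Lemma closed_sup_in (A : set R) : A !=set0 -> compact A -> A (sup A).
Proof.
move=> A0 cA; have [_ ub] := compact_has_sup A0 cA.
have cl : closed A by apply: compact_closed => //; exact: Rhausdorff.
by move: (closure_sup A0 ub); rewrite -(closure_id A).1.
Qed.

Lemma comp_closed (K : set pt) x : closed K -> closed (connected_component K x).
Proof.
move=> cK; set C := connected_component K x.
have [Kx|nKx] := pselect (K x); last first.
  by rewrite /C connected_component_out //; exact: closed0.
rewrite closure_id; apply/seteqP; split; first exact: subset_closure.
apply: connected_component_max.
- by apply: subset_closure; exact: connected_component_refl.
- rewrite (closure_id K).1 //; apply: closure_subset; exact: connected_component_sub.
- apply: connected_closure; exact: component_connected.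
Qed.

Lemma comp_segment (K : set pt) x : compact K -> K x ->
  (forall z, connected_component K x z -> z.2 = x.2) ->
  (exists y, y != x /\ connected_component K x y) ->
  line_segment (connected_component K x).
Proof.
move=> cK Kx hor [y [yx Cy]].
set C := connected_component K x.
have Cx : C x by exact: connected_component_refl.
have clK : closed K by apply: compact_closed => //; exact: norm_hausdorff.
have cC : compact C.
  apply: (subclosed_compact (@comp_closed K x clK) cK); exact: connected_component_sub.
set S := (fun z : pt => z.1) @` C.
have cS : compact S.
  apply: continuous_compact; last exact: cC.
  apply: continuous_subspaceT; exact: fst_cont.
have S0 : S !=set0 by exists x.1; exists x.
have SM := closed_sup_in S0 cS.
set T := (fun a : R => - a) @` S.
have cT : compact T.
  apply: continuous_compact; last exact: cS.
  apply: continuous_subspaceT => a; exact: continuousN.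
have T0 : T !=set0 by exists (- x.1); exists x.1 => //; exists x.
have Tm := closed_sup_in T0 cT.
have [_ ubT] := compact_has_sup T0 cT.
have [_ ubS] := compact_has_sup S0 cS.
set M := sup S; set m := - sup T.
have Sm : S m by case: Tm => a Sa e; rewrite /m -e opprK.
have mle : forall a, S a -> m <= a.
  move=> a Sa; rewrite /m lerNl; apply: sup_upper_bound => //; by exists a.
have leM : forall a, S a -> a <= M by move=> a Sa; apply: sup_upper_bound.
have Sint : is_interval S.
  apply/connected_intervalP; apply: connected_continuous_connected.
  - exact: component_connected.
  - by apply: continuous_subspaceT; exact: fst_cont.
have yx1 : y.1 != x.1.
  apply: contraNneq yx => e; apply/eqP.
  by rewrite [y]surjective_pairing [x]surjective_pairing e (hor y Cy).
have mM : m < M.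
  rewrite lt_neqAle (le_trans (mle _ _) (leM y.1 _)) ?andbT; try by exists y.
  apply/negP => /eqP mMe.
  have h1 := mle x.1 (ex_intro2 _ _ x Cx erefl).
  have h2 := leM x.1 (ex_intro2 _ _ x Cx erefl).
  have h3 := mle y.1 (ex_intro2 _ _ y Cy erefl).
  have h4 := leM y.1 (ex_intro2 _ _ y Cy erefl).
  by move/eqP: yx1; apply; lra.
exists (m, x.2), (M, x.2); split.
  by apply/eqP => -[] /eqP; rewrite lt_eqF.
apply/seteqP; split => z.
- move=> Cz; have zS : S z.1 by exists z.
  exists ((z.1 - m) / (M - m)); split.
  + by rewrite divr_ge0 // subr_ge0 mle.
  + by rewrite ler_pdivrMr ?subr_gt0 // mul1r lerD2r leM.
  + case: z Cz zS => a b Cz zS /=; congr (_, _).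
    * by field; rewrite subr_eq0 gt_eqF.
    * by rewrite -(hor _ Cz) /=; ring.
- case=> t [t0 t1 ->] /=.
  have : S ((1 - t) * m + t * M).
    apply: (Sint m M) => //; apply/andP; split; nra.
  case=> w Cw we.
  have w2 := hor w Cw.
  have -> : ((1 - t) * m + t * M, (1 - t) * x.2 + t * x.2) = w.
    by rewrite [w]surjective_pairing we w2; congr (_, _); ring.
  exact: Cw.
Qed.


Lemma block_of_connect (N : nat) (r : 'I_N -> R) (d : 'I_N -> pt) a b :
  connect (hnext r d) a b -> same_horizontal_block r d a b.
Proof.
move=> /connectP [p pth ->].
case/shortenP: pth => p' pth' uq _.
pose P n := exists s, [/\ hchain r d s, a \in s, last a p' \in s & size s = n].
have P0 : exists n, `[< P n >].
  exists (size (a :: p')); apply/asboolP; exists (a :: p'); split => //.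
  - by rewrite mem_head.
  - exact: mem_last.
have Pb : forall n, `[< P n >] -> (n <= N)%N.
  move=> n /asboolP [s [[us _] _ _ <-]].
  have := @uniq_leq_size _ s (enum 'I_N) us (fun i _ => mem_enum _ i).
  by rewrite size_enum_ord.
case: (ex_maxnP P0 Pb) => m /asboolP [s [[us ss] sa sb sm]] maxm.
exists [set i | i \in s]; split; last by split.
split; first by exists s.
move=> s' [us' ss'] sub z zs'.
have ha : a \in s' by exact: (sub a sa).
have hb : last a p' \in s' by exact: (sub _ sb).
have : (size s' <= m)%N by apply: maxm; apply/asboolP; exists s'.
rewrite -sm => le.
have [_ eq] := uniq_min_size us (fun i (h : i \in s) => sub i h) le.
by rewrite /= eq.
Qed.

End Seg.

Unset Implicit Arguments. Set Strict Implicit.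

Theorem lemmaA1 (R : realType) (N : nat) (r : 'I_N -> R) (d : 'I_N -> (R * R))
    (K : set ((R * R))) (alpha beta : 'I_N) :
  gasket_IFS r d -> is_attractor r d K ->
  K (om_a R) -> K (om_b R) ->
  phi r d alpha (om_a R) = om_a R -> phi r d beta (om_b R) = om_b R ->
  (top_isolated r d K \/ ~ K (om_g R)) ->
  (forall x, K x -> (exists y, y != x /\ connected_component K x y) ->
     line_segment (connected_component K x)) /\
  (~ same_horizontal_block r d alpha beta -> totally_disconnected K).
Proof.
move=> HI HA Koa Kob Ha Hb Htop.
have [J0 [H1 H2 H3 H3']] : exists J0 : set 'I_N,
  [/\ forall j k, J0 j -> ~ J0 k -> phi r d j @` (@Delta R) `&` phi r d k @` (@Delta R) = set0,
      K (om_g R) -> exists g, ~ J0 g /\ phi r d g (om_g R) = om_g R,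
      forall j, phi r d j (om_a R) = om_a R -> J0 j &
      forall j, phi r d j (om_b R) = om_b R -> J0 j].
  case: Htop => [[Kg [g [eg tg]]]|nKg].
  - have [_ nag nbg] := corner_neq R.
    have [_ nag' _] := corner_neq R.
    exists [set j | j != g]; split.
    + move=> j k /= jg /negP; rewrite negbK => /eqP ->.
      by rewrite setIC; apply: tg.
    + by move=> _; exists g; split => //=; rewrite eqxx.
    + move=> j ej /=; apply/negP => /eqP jg; subst j.
      by apply: (two_fix HI (c := om_a R) (c' := om_g R) _ _ nag ej eg); [left|right; right].
    + move=> j ej /=; apply/negP => /eqP jg; subst j.
      by apply: (two_fix HI (c := om_b R) (c' := om_g R) _ _ nbg ej eg); [right; left|right; right].
  - by exists setT; split.
have Kc : compact K by case: HA.
split.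
- move=> x Kx Hy; apply: comp_segment => //.
  move=> z Cz; apply/esym.
  apply: (horizontal HI HA H1 H2 H3 H3' (C := connected_component K x)).
  + exact: component_connected.
  + exact: connected_component_sub.
  + exact: connected_component_refl.
  + exact: Cz.
- move=> nsb.
  have Hnc : ~ connect (hnext r d) alpha beta by move/block_of_connect.
  move=> x Kx; apply/seteqP; split => z.
  + move=> Cz; apply/esym.
    apply: (total_disc HI HA H1 H2 H3 H3' Ha Hb Hnc (C := connected_component K x)).
    * exact: component_connected.
    * exact: connected_component_sub.
    * exact: connected_component_refl.
    * exact: Cz.
  + by move=> ->; exact: connected_component_refl.
Qed.
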